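(* Let $M$ be a monoid and let $\chi=(r_0,T,\alpha,\theta)$ be an elliptic $M$-tree. Define $D_\chi:M\times M\to\overline{\mathbb N}$ by $D_\chi(m,m')=|\alpha m\wedge\alpha m'|$. Then: (i) $D_\chi$ is a length function for $M$; (ii) if $\mathrm{dep}(r_0,T)=l\in\mathbb N$, then the function $d(m,m')=2l-2D_\chi(m,m')$ satisfies $d(m,m')=d_T(\alpha_l m,\alpha_l m')$; (iii) if $\mathrm{dep}(r_0,T)=l\in\mathbb N$ and $\chi$ is strongly faithful, then $d$ is an ultrametric (in particular $d(m,m')=0$ implies $m=m'$).
   Context: $\overline{\mathbb N}=\mathbb N\cup\{\omega\}$. Rooted tree $(r_0,T)$: tree with root $r_0$, $\mathrm{dep}(v)=d_T(r_0,v)$, $\mathrm{dep}(r_0,T)=\sup_v\mathrm{dep}(v)$. A ray is either a geodesic $(\alpha_l,\dots,\alpha_1,\alpha_0=r_0)$ (length $|\alpha|=l$) or an infinite path $(\dots,\alpha_1,\alpha_0=r_0)$ with $\mathrm{dep}(\alpha_i)=i$ (length $\omega$); $\alpha\le\beta$ if $|\alpha|\le|\beta|$ and $\alpha_i=\beta_i$ for all $i\le|\alpha|$; maximal rays are maximal for $\le$; $(r_0,T)$ is uniform if all maximal rays have the same length. $\alpha\wedge\beta$ is the longest common initial segment of $\alpha$ and $\beta$ (equal to $\alpha$ if $\alpha=\beta$). Elliptic contractions are depth-preserving, distance-non-increasing maps of vertices; $\mathrm{Ell}(r_0,T)$ is their monoid. An elliptic action is a monoid homomorphism $\theta:M\to\mathrm{Ell}(r_0,T)$,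 written $v\mapsto vm$, extended to rays by $\alpha m=(\dots,\alpha_1m,\alpha_0m)$. An elliptic $M$-tree is $\chi=(r_0,T,\alpha,\theta)$ with $(r_0,T)$ uniform, $\alpha$ a maximal ray and $\theta$ an elliptic action that is $\alpha$-transitive: $\mathrm{Vert}(T)=\bigcup_i\alpha_iM$. It is strongly faithful if $\alpha m=\alpha m'$ implies $m=m'$. A length function for $M$ is $D:M\times M\to\overline{\mathbb N}$ with (L1) $D(m,m')=D(m',m)$; (L2) $D(m',m'')\le D(m,m)$; (L3) $D(m',m'')\le D(m'm,m''m)$; (L4) $D(m,m'')\ge\min\{D(m,m'),D(m',m'')\}$, for all $m,m',m''$. *)

(* Defs.v *)
From Stdlib Require Import Arith Lia Classical ClassicalEpsilon.

Set Implicit Arguments.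

Inductive natbar : Type := Fin : nat -> natbar | Omega : natbar.

Definition nb_le (a b : natbar) : Prop :=
  match a, b with
  | _, Omega => True
  | Omega, Fin _ => False
  | Fin x, Fin y => x <= y
  end.

Definition nb_min (a b : natbar) : natbar :=
  match a, b with
  | Omega, y => y
  | x, Omega => x
  | Fin x, Fin y => Fin (Nat.min x y)
  end.

Section Graph.
Variables (V : Type) (E : V -> V -> Prop).

Definition walk (u v : V) (n : nat) : Prop :=
  exists f : nat -> V, f 0 = u /\ f n = v /\ forall i, i < n -> E (f i) (f (S i)).

Definition dist (u v : V) : nat :=
  epsilon (inhabits 0) (fun n => walk u v n /\ forall k, walk u v k -> n <= k).

Definition is_tree : Prop :=
  (forall u v, E u v -> E v u) /\
  (forall u, ~ E u u) /\
  (forall u v, exists n, walk u v n) /\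
  (forall (n : nat) (f : nat -> V), 3 <= n -> f 0 = f n ->
      (forall i, i < n -> E (f i) (f (S i))) ->
      (forall i j, i < j < n -> f i <> f j) -> False).

Variable r0 : V.

Definition dep (v : V) : nat := dist r0 v.

(* dep(r0,T) = sup_v dep v equals the finite value l *)
Definition tree_depth_eq (l : nat) : Prop :=
  (forall v, dep v <= l) /\ (exists v, dep v = l).

(* Rays.  A ray is a length |alpha| in N-bar together with the vertices
   alpha_i (the values at indices i > |alpha| are irrelevant).          *)
Record ray : Type := Ray { rlen : natbar; rf : nat -> V }.

Definition is_ray (a : ray) : Prop :=
  rf a 0 = r0 /\
  match rlen a with
  | Fin l =>
      (forall i, i < l -> E (rf a (S i)) (rf a i)) /\ dist (rf a l) (rf a 0) = l
  | Omega =>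
      (forall i, E (rf a (S i)) (rf a i)) /\ (forall i, dep (rf a i) = i)
  end.

Definition ray_le (a b : ray) : Prop :=
  nb_le (rlen a) (rlen b) /\ (forall i, nb_le (Fin i) (rlen a) -> rf a i = rf b i).

Definition ray_eq (a b : ray) : Prop := ray_le a b /\ ray_le b a.

Definition maximal_ray (a : ray) : Prop :=
  is_ray a /\ forall b, is_ray b -> ray_le a b -> ray_le b a.

Definition uniform : Prop :=
  forall a b, maximal_ray a -> maximal_ray b -> rlen a = rlen b.

(* |alpha /\ beta| : length of the longest common initial segment *)
Definition agree (a b : ray) (i : nat) : Prop :=
  nb_le (Fin i) (rlen a) /\ nb_le (Fin i) (rlen b) /\
  (forall j, j <= i -> rf a j = rf b j).

Definition meet_len (a b : ray) : natbar :=
  match excluded_middle_informative (forall i, agree a b i) with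
  | left _ => Omega
  | right _ => Fin (epsilon (inhabits 0) (fun n => agree a b n /\ ~ agree a b (S n)))
  end.

Definition elliptic_contraction (f : V -> V) : Prop :=
  (forall v, dep (f v) = dep v) /\ (forall u v, dist (f u) (f v) <= dist u v).

End Graph.

Definition ray_act (V : Type) (a : ray V) (g : V -> V) : ray V :=
  Ray (rlen a) (fun i => g (rf a i)).

Definition is_monoid (M : Type) (mul : M -> M -> M) (one : M) : Prop :=
  (forall x y z, mul x (mul y z) = mul (mul x y) z) /\
  (forall x, mul one x = x) /\ (forall x, mul x one = x).

(* An elliptic action theta : M -> Ell(r0,T), written v |-> v m = theta m v;
   a monoid homomorphism for the right-action convention v(mm') = (vm)m'. *)
Definition elliptic_action (V : Type) (E : V -> V -> Prop) (r0 : V)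
    (M : Type) (mul : M -> M -> M) (one : M) (theta : M -> V -> V) : Prop :=
  (forall m, elliptic_contraction E r0 (theta m)) /\
  (forall v, theta one v = v) /\
  (forall m m' v, theta (mul m m') v = theta m' (theta m v)).

Definition elliptic_M_tree (V : Type) (E : V -> V -> Prop) (r0 : V)
    (M : Type) (mul : M -> M -> M) (one : M)
    (alpha : ray V) (theta : M -> V -> V) : Prop :=
  is_tree E /\ uniform E r0 /\ maximal_ray E r0 alpha /\
  elliptic_action E r0 mul one theta /\
  (forall v, exists i m, nb_le (Fin i) (rlen alpha) /\ v = theta m (rf alpha i)).

Definition strongly_faithful (V : Type) (M : Type) (alpha : ray V)
    (theta : M -> V -> V) : Prop :=
  forall m m', ray_eq (ray_act alpha (theta m)) (ray_act alpha (theta m')) -> m = m'.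

Definition D_chi (V : Type) (M : Type) (alpha : ray V) (theta : M -> V -> V)
    (m m' : M) : natbar :=
  meet_len (ray_act alpha (theta m)) (ray_act alpha (theta m')).

(* length functions (L1)-(L4) *)
Definition length_function (M : Type) (mul : M -> M -> M)
    (D : M -> M -> natbar) : Prop :=
  (forall m m', D m m' = D m' m) /\
  (forall m m' m'', nb_le (D m' m'') (D m m)) /\
  (forall m m' m'', nb_le (D m' m'') (D (mul m' m) (mul m'' m))) /\
  (forall m m' m'', nb_le (nb_min (D m m') (D m' m'')) (D m m'')).

(* d(m,m') = 2l - 2 D(m,m')  (only meaningful when D(m,m') is finite) *)
Definition d_of (M : Type) (l : nat) (D : M -> M -> natbar) (m m' : M) : nat :=
  match D m m' with Fin k => 2 * l - 2 * k | Omega => 0 end.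

Definition ultrametric (M : Type) (d : M -> M -> nat) : Prop :=
  (forall m m', d m m' = 0 <-> m = m') /\
  (forall m m', d m m' = d m' m) /\
  (forall m m' m'', d m m'' <= Nat.max (d m m') (d m' m'')).

(* Main.v *)
Require Import Defs.
From Stdlib Require Import Arith Lia Classical ClassicalEpsilon.
Set Implicit Arguments.

Section G.
Variables (V : Type) (E : V -> V -> Prop).
Hypothesis Esym : forall u v, E u v -> E v u.

Lemma walk0 u v : walk E u v 0 -> u = v.
Proof. intros [f [H0 [H1 _]]]. congruence. Qed.

Lemma walk_refl u : walk E u u 0.
Proof. exists (fun _ => u). repeat split; intros; lia. Qed.

Lemma walk1 u v : E u v -> walk E u v 1.
Proof. intros H. exists (fun i => if i =? 0 then u else v). repeat split.
  intros i Hi. assert (i = 0) by lia. subst i. simpl. exact H. Qed.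

Lemma walk1_inv u v : walk E u v 1 -> E u v.
Proof. intros [f [H0 [H1 H]]]. specialize (H 0 ltac:(lia)). congruence. Qed.

Lemma walk_cat u v w a b : walk E u v a -> walk E v w b -> walk E u w (a + b).
Proof.
  intros [f [f0 [fa Hf]]] [g [g0 [gb Hg]]].
  exists (fun i => if i <=? a then f i else g (i - a)). repeat split.
  - simpl. exact f0.
  - destruct (Nat.leb_spec (a+b) a).
    + assert (b = 0) by lia. subst b. rewrite Nat.add_0_r. rewrite fa. congruence.
    + replace (a + b - a) with b by lia. exact gb.
  - intros i Hi. destruct (Nat.leb_spec i a); destruct (Nat.leb_spec (S i) a).
    + apply Hf; lia.
    + assert (i = a) by lia. subst i. replace (S a - a) with 1 by lia.
      rewrite fa. rewrite <- g0. apply Hg. lia.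
    + lia.
    + replace (S i - a) with (S (i - a)) by lia. apply Hg. lia.
Qed.

Lemma walk_rev u v n : walk E u v n -> walk E v u n.
Proof.
  intros [f [f0 [fn Hf]]]. exists (fun i => f (n - i)). repeat split.
  - rewrite Nat.sub_0_r. exact fn.
  - rewrite Nat.sub_diag. exact f0.
  - intros i Hi. apply Esym. replace (n - i) with (S (n - S i)) by lia. apply Hf. lia.
Qed.

Lemma walk_snoc_inv u v n : walk E u v (S n) -> exists w, walk E u w n /\ E w v.
Proof.
  intros [f [f0 [fn Hf]]]. exists (f n). split.
  - exists f. repeat split; auto.
  - rewrite <- fn. apply Hf. lia.
Qed.

Lemma min_exists (P : nat -> Prop) : (exists n, P n) -> exists n, P n /\ forall k, P k -> n <= k.
Proof.
  intros [n Hn]. revert Hn. induction n as [n IH] using lt_wf_ind. intros Hn.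
  destruct (classic (exists k, k < n /\ P k)) as [[k [Hk Pk]]|Hno].
  - apply (IH k Hk Pk).
  - exists n. split; auto. intros k Pk. destruct (Nat.lt_ge_cases k n); auto.
    exfalso. apply Hno. eauto.
Qed.

Hypothesis Econn : forall u v, exists n, walk E u v n.

Lemma dist_spec u v : walk E u v (dist E u v) /\ forall k, walk E u v k -> dist E u v <= k.
Proof.
  unfold dist. apply epsilon_spec. apply min_exists. apply Econn.
Qed.

Lemma dist_walk u v : walk E u v (dist E u v).
Proof. apply dist_spec. Qed.
Lemma dist_le u v k : walk E u v k -> dist E u v <= k.
Proof. apply dist_spec. Qed.
Lemma dist_sym u v : dist E u v = dist E v u.
Proof.
  apply Nat.le_antisymm; apply dist_le; apply walk_rev; apply dist_walk.
Qed.
Lemma dist_tri u v w : dist E u w <= dist E u v + dist E v w.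
Proof. apply dist_le. apply walk_cat with v; apply dist_walk. Qed.
Lemma dist_refl u : dist E u u = 0.
Proof. pose proof (dist_le (walk_refl u)). lia. Qed.
Lemma dist0 u v : dist E u v = 0 -> u = v.
Proof. intros H. pose proof (dist_walk u v) as W. rewrite H in W. apply walk0; auto. Qed.
Lemma dist_edge u v : E u v -> dist E u v <= 1.
Proof. intros; apply dist_le, walk1; auto. Qed.

Variable r0 : V.

Lemma dep_r0 : dep E r0 r0 = 0.
Proof. apply dist_refl. Qed.
Lemma dep_0 v : dep E r0 v = 0 -> v = r0.
Proof. intros H. symmetry. apply dist0. exact H. Qed.
Lemma dep_edge u v : E u v -> dep E r0 v <= S (dep E r0 u).
Proof. intros H. unfold dep. pose proof (dist_tri r0 u v). pose proof (dist_edge H). lia. Qed.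

Definition chain (c : nat -> V) (s : nat) : Prop :=
  (forall i, i <= s -> dep E r0 (c i) = i) /\ (forall i, i < s -> E (c (S i)) (c i)).

Lemma chain_restrict c s t : chain c s -> t <= s -> chain c t.
Proof. intros [H1 H2] Ht. split; intros; [apply H1|apply H2]; lia. Qed.

Lemma chain_walk c s i j : (forall i, i < s -> E (c (S i)) (c i)) -> i <= j -> j <= s ->
  walk E (c j) (c i) (j - i).
Proof.
  intros H Hij Hjs. exists (fun t => c (j - t)). repeat split.
  - rewrite Nat.sub_0_r; auto.
  - f_equal; lia.
  - intros t Ht. replace (j - t) with (S (j - S t)) by lia. apply H. lia.
Qed.

Lemma chain_exists v : exists c, chain c (dep E r0 v) /\ c (dep E r0 v) = v.
Proof.
  pose proof (dist_walk r0 v) as [f [f0 [fn Hf]]]. fold (dep E r0 v) in fn, Hf.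
  set (n := dep E r0 v) in *.
  exists f. split; [split|exact fn].
  - intros i Hi. apply Nat.le_antisymm.
    + apply dist_le. exists f. repeat split; auto. intros; apply Hf; lia.
    + assert (W : walk E (f i) v (n - i)).
      { exists (fun t => f (i + t)). repeat split.
        - f_equal; lia.
        - rewrite <- fn. f_equal; lia.
        - intros t Ht. replace (i + S t) with (S (i + t)) by lia. apply Hf. lia. }
      pose proof (dist_le W). pose proof (dist_tri r0 (f i) v). unfold dep in *. lia.
  - intros i Hi. apply Esym. apply Hf. exact Hi.
Qed.

Hypothesis Eirr : forall u, ~ E u u.
Hypothesis Hacyc : forall (n : nat) (f : nat -> V), 3 <= n -> f 0 = f n ->
      (forall i, i < n -> E (f i) (f (S i))) ->
      (forall i j, i < j < n -> f i <> f j) -> False.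

Lemma last_agree (a b : nat -> V) s : a 0 = b 0 ->
  exists j, j <= s /\ a j = b j /\ forall i, j < i <= s -> a i <> b i.
Proof.
  intros H0. induction s.
  - exists 0. repeat split; auto. intros; lia.
  - destruct (classic (a (S s) = b (S s))).
    + exists (S s). repeat split; auto. intros; lia.
    + destruct IHs as [j [Hj [Hab Hne]]]. exists j. repeat split; auto.
      intros i Hi. destruct (Nat.eq_dec i (S s)). subst i; auto. apply Hne; lia.
Qed.

Lemma no_cycle_conn a b s e (g : nat -> V) :
  chain a s -> chain b s -> a s <> b s -> 1 <= e <= 2 ->
  g 0 = a s -> g e = b s -> (forall i, i < e -> E (g i) (g (S i))) ->
  (forall i, 0 < i < e -> dep E r0 (g i) = S s) -> False.
Proof.
  intros [Da Ea] [Db Eb] Hne He Hg0 Hge Eg Dg.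
  assert (Ha0 : a 0 = r0) by (apply dep_0; apply Da; lia).
  assert (Hb0 : b 0 = r0) by (apply dep_0; apply Db; lia).
  destruct (last_agree a b s ltac:(congruence)) as [j [Hjs [Hj Hdiff]]].
  assert (Hjs' : j < s). { destruct (Nat.eq_dec j s); [subst j; congruence|lia]. }
  set (n := 2 * (s - j) + e).
  set (f := fun i => if i <=? s - j then a (j + i)
                     else if i <? s - j + e then g (i - (s - j)) else b (j + n - i)).
  assert (fA : forall i, i <= s - j -> f i = a (j + i)).
  { intros i Hi. unfold f. destruct (Nat.leb_spec i (s - j)); [reflexivity|lia]. }
  assert (fG : forall i, s - j < i < s - j + e -> f i = g (i - (s - j))).
  { intros i Hi. unfold f. destruct (Nat.leb_spec i (s - j)); [lia|].
    destruct (Nat.ltb_spec i (s - j + e)); [reflexivity|lia]. }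
  assert (fB : forall i, s - j + e <= i -> f i = b (j + n - i)).
  { intros i Hi. unfold f. destruct (Nat.leb_spec i (s - j)); [lia|].
    destruct (Nat.ltb_spec i (s - j + e)); [lia|reflexivity]. }
  apply (@Hacyc n f).
  - unfold n; lia.
  - rewrite fA by lia. rewrite fB by (unfold n; lia).
    replace (j + 0) with j by lia. replace (j + n - n) with j by lia. exact Hj.
  - intros i Hi.
    destruct (Nat.lt_ge_cases i (s - j)).
    + rewrite fA by lia. rewrite fA by lia. replace (j + S i) with (S (j + i)) by lia.
      apply Esym, Ea. lia.
    + destruct (Nat.eq_dec i (s - j)).
      * subst i. rewrite fA by lia. replace (j + (s - j)) with s by lia.
        destruct (Nat.eq_dec e 1).
        -- rewrite fB by lia. replace (j + n - S (s - j)) with s by (unfold n; lia).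
           rewrite <- Hg0, <- Hge. subst e. apply Eg. lia.
        -- rewrite fG by lia. replace (S (s - j) - (s - j)) with 1 by lia.
           rewrite <- Hg0. apply Eg. lia.
      * destruct (Nat.lt_ge_cases i (s - j + e)).
        -- assert (e = 2) by lia. assert (i = s - j + 1) by lia. subst i.
           rewrite fG by lia. rewrite fB by lia.
           replace (s - j + 1 - (s - j)) with 1 by lia.
           replace (j + n - S (s - j + 1)) with s by (unfold n; lia).
           rewrite <- Hge. subst e. apply Eg. lia.
        -- rewrite fB by lia. rewrite fB by lia.
           replace (j + n - i) with (S (j + n - S i)) by (unfold n; lia).
           apply Eb. unfold n in *. lia.
  -
    assert (Dep : forall i, i < n -> dep E r0 (f i) =
              if i <=? s - j then j + i else if i <? s - j + e then S s else j + n - i).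
    { intros i Hi. destruct (Nat.leb_spec i (s - j)).
      - rewrite fA by lia. apply Da. lia.
      - destruct (Nat.ltb_spec i (s - j + e)).
        + rewrite fG by lia. apply Dg. lia.
        + rewrite fB by lia. apply Db. unfold n in *; lia. }
    intros i i' Hii' Heq.
    pose proof (Dep i ltac:(lia)) as D1. pose proof (Dep i' ltac:(lia)) as D2.
    rewrite Heq in D1. rewrite D1 in D2.
    destruct (Nat.leb_spec i (s - j)); destruct (Nat.ltb_spec i (s - j + e));
    destruct (Nat.leb_spec i' (s - j)); destruct (Nat.ltb_spec i' (s - j + e));
    unfold n in *; try lia.
    (* remaining: i in A, i' in B *)
    all: rewrite fA in Heq by lia; rewrite fB in Heq by (unfold n; lia);
      replace (j + (2 * (s - j) + e) - i') with (j + i) in Heq by lia;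
      apply (Hdiff (j + i)); [lia | exact Heq].
Qed.

Lemma no_flat_edge u w : E u w -> dep E r0 u <> dep E r0 w.
Proof.
  intros H Hd. destruct (chain_exists u) as [a [Ca Au]].
  destruct (chain_exists w) as [b [Cb Bw]]. rewrite <- Hd in Cb, Bw.
  apply (@no_cycle_conn a b (dep E r0 u) 1 (fun i => if i =? 0 then u else w)); auto.
  - rewrite Au, Bw. intros Heq. rewrite <- Heq in H. apply (Eirr H).
  - intros i Hi. assert (i = 0) by lia. subst i. exact H.
  - intros; lia.
Qed.

Lemma unique_parent v u u' : E v u -> E v u' -> dep E r0 u = dep E r0 u' ->
  S (dep E r0 u) = dep E r0 v -> u = u'.
Proof.
  intros H1 H2 Hd Hv. apply NNPP. intros Hne.
  destruct (chain_exists u) as [a [Ca Au]].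
  destruct (chain_exists u') as [b [Cb Bw]]. rewrite <- Hd in Cb, Bw.
  apply (@no_cycle_conn a b (dep E r0 u) 2
           (fun i => if i =? 0 then u else if i =? 1 then v else u')); auto.
  - congruence.
  - intros i Hi. destruct i as [|[|]]; simpl; auto; lia.
  - intros i Hi. assert (i = 1) by lia. subst i. simpl. auto.
Qed.

Lemma chain_unique c c' s : chain c s -> chain c' s -> c s = c' s ->
  forall i, i <= s -> c i = c' i.
Proof.
  intros [D1 E1] [D2 E2] Hs.
  assert (K : forall t, t <= s -> c (s - t) = c' (s - t)).
  { induction t; intros Ht.
    - rewrite Nat.sub_0_r; auto.
    - assert (Hx : s - t = S (s - S t)) by lia.
      pose proof (IHt ltac:(lia)) as IH. rewrite Hx in IH.
      apply (@unique_parent (c (S (s - S t)))).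
      + apply E1; lia.
      + rewrite IH. apply E2; lia.
      + rewrite D1, D2; lia.
      + rewrite D1, D1; lia. }
  intros i Hi. replace i with (s - (s - i)) by lia. apply K. lia.
Qed.

Lemma edge_class u v : E u v ->
  dep E r0 v = S (dep E r0 u) \/ dep E r0 u = S (dep E r0 v).
Proof.
  intros H. pose proof (dep_edge H). pose proof (dep_edge (Esym H)).
  pose proof (no_flat_edge H). lia.
Qed.

Lemma child_chain u v cu cv : E u v -> dep E r0 v = S (dep E r0 u) ->
  chain cv (dep E r0 v) -> cv (dep E r0 v) = v ->
  chain cu (dep E r0 u) -> cu (dep E r0 u) = u ->
  forall i, i <= dep E r0 u -> cv i = cu i.
Proof.
  intros H Hd Cv Vv Cu Uu.
  assert (P : cv (dep E r0 u) = u).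
  { destruct Cv as [Dv Ev].
    apply (@unique_parent v).
    - rewrite <- Vv, Hd. apply Ev. lia.
    - apply Esym; auto.
    - rewrite Dv; lia.
    - rewrite Dv; lia. }
  apply chain_unique.
  - apply chain_restrict with (dep E r0 v); auto; lia.
  - auto.
  - congruence.
Qed.

Lemma lower x cx : chain cx (dep E r0 x) -> cx (dep E r0 x) = x ->
  forall n y, walk E x y n -> forall cy, chain cy (dep E r0 y) -> cy (dep E r0 y) = y ->
  forall c, c <= dep E r0 x -> c <= dep E r0 y ->
  (c = Nat.min (dep E r0 x) (dep E r0 y) \/
   (c < dep E r0 x /\ c < dep E r0 y /\ cx (S c) <> cy (S c))) ->
  dep E r0 x + dep E r0 y <= n + 2 * c.
Proof.
  intros Cx Xx n. induction n as [|n IH]; intros y W cy Cy Yy c H1 H2 Hc.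
  - apply walk0 in W. subst y.
    destruct Hc as [Hc|[Ha [Hb Hn]]].
    + rewrite Nat.min_id in Hc. lia.
    + exfalso. apply Hn. apply (chain_unique Cx Cy); congruence || lia.
  - apply walk_snoc_inv in W as [u [Wu Huv]].
    destruct (chain_exists u) as [cu [Cu Uu]].
    set (dx := dep E r0 x) in *. set (du := dep E r0 u) in *. set (dv := dep E r0 y) in *.
    destruct (edge_class Huv) as [Hd|Hd].
    + pose proof (child_chain Huv Hd Cy Yy Cu Uu) as Agr. fold du dv in Agr.
      destruct (Nat.le_gt_cases c du).
      * assert (IHc : dx + du <= n + 2 * c).
        { apply (IH u Wu cu Cu Uu c); auto.
          destruct Hc as [Hc|[Ha [Hb Hn]]].
          - left. lia.
          - destruct (Nat.eq_dec c du).
            + left. lia.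
            + right. repeat split; try lia. rewrite <- Agr by lia. exact Hn. }
        lia.
      * assert (IHc : dx + du <= n + 2 * du).
        { apply (IH u Wu cu Cu Uu du); try lia. }
        lia.
    + pose proof (child_chain (Esym Huv) Hd Cu Uu Cy Yy) as Agr. fold du dv in Agr.
      destruct Hc as [Hc|[Ha [Hb Hn]]].
      * destruct (Nat.le_gt_cases dx dv).
        -- assert (IHc : dx + du <= n + 2 * c).
           { apply (IH u Wu cu Cu Uu c); try lia. }
           lia.
        -- destruct (classic (cx (S c) = u)) as [Hcx|Hcx].
           ++ assert (IHc : dx + du <= n + 2 * du).
              { apply (IH u Wu cu Cu Uu du); try lia. }
              lia.
           ++ assert (IHc : dx + du <= n + 2 * c).
              { apply (IH u Wu cu Cu Uu c); try lia. right. repeat split; try lia.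
                replace (S c) with du in * by lia. rewrite Uu. exact Hcx. }
              lia.
      * assert (IHc : dx + du <= n + 2 * c).
        { apply (IH u Wu cu Cu Uu c); try lia. right. repeat split; try lia.
          rewrite Agr by lia. exact Hn. }
        lia.
Qed.

Lemma chain_dist p q l k : chain p l -> chain q l -> k <= l ->
  (forall i, i <= k -> p i = q i) -> (k < l -> p (S k) <> q (S k)) ->
  dist E (p l) (q l) = 2 * l - 2 * k.
Proof.
  intros Cp Cq Hk Hagr Hdiv. apply Nat.le_antisymm.
  - apply dist_le.
    replace (2 * l - 2 * k) with ((l - k) + (l - k)) by lia.
    apply walk_cat with (p k).
    + apply chain_walk with l; auto. apply Cp.
    + rewrite Hagr by lia. apply walk_rev. apply chain_walk with l; auto. apply Cq.
  - assert (Dp : dep E r0 (p l) = l) by (apply Cp; lia).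
    assert (Dq : dep E r0 (q l) = l) by (apply Cq; lia).
    assert (L := @lower (p l) p ltac:(rewrite Dp; auto) ltac:(rewrite Dp; auto)
                   _ (q l) (dist_walk (p l) (q l)) q ltac:(rewrite Dq; auto)
                   ltac:(rewrite Dq; auto) k ltac:(lia) ltac:(lia)).
    rewrite Dp, Dq in L.
    assert (k = l \/ k < l) as [->|Hl] by lia.
    + specialize (L ltac:(left; lia)). lia.
    + specialize (L ltac:(right; repeat split; auto)). lia.
Qed.
End G.

Lemma nb_le_refl x : nb_le x x.
Proof. destruct x; simpl; auto. Qed.

Lemma nb_le_Fin_down j i x : j <= i -> nb_le (Fin i) x -> nb_le (Fin j) x.
Proof. destruct x; simpl; auto; lia. Qed.

Lemma agree_down V (a b : ray V) j i : j <= i -> agree a b i -> agree a b j.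
Proof.
  intros H [H1 [H2 H3]]. repeat split; try (eapply nb_le_Fin_down; eauto).
  intros; apply H3; lia.
Qed.

Lemma meet_spec V (a b : ray V) : agree a b 0 ->
  forall i, nb_le (Fin i) (meet_len a b) <-> agree a b i.
Proof.
  intros H0. unfold meet_len.
  destruct (excluded_middle_informative (forall i, agree a b i)) as [Hall|Hn].
  - intros i; simpl; split; auto.
  - apply not_all_ex_not in Hn as [i0 Hi0].
    assert (Hex : exists n, agree a b n /\ ~ agree a b (S n)).
    { clear -H0 Hi0. induction i0. contradiction.
      destruct (classic (agree a b i0)). eauto. auto. }
    pose proof (epsilon_spec (inhabits 0) (fun n => agree a b n /\ ~ agree a b (S n)) Hex)
      as [HN1 HN2].
    set (N := epsilon _ _) in *.
    intros i. simpl. split.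
    + intros Hi. apply agree_down with N; auto.
    + intros Hi. destruct (Nat.le_gt_cases i N); auto.
      exfalso. apply HN2. apply agree_down with i; auto.
Qed.

Lemma nb_le_via x y : (forall i, nb_le (Fin i) x -> nb_le (Fin i) y) -> nb_le x y.
Proof.
  intros H. destruct x as [n|], y as [m|]; simpl; auto.
  - apply (H n). simpl; lia.
  - pose proof (H (S m) I) as Hc. simpl in Hc. lia.
Qed.

Lemma nb_le_antisym x y : nb_le x y -> nb_le y x -> x = y.
Proof. destruct x, y; simpl; intros; try contradiction; auto. f_equal; lia. Qed.

Lemma nb_min_Fin i x y : nb_le (Fin i) (nb_min x y) <-> nb_le (Fin i) x /\ nb_le (Fin i) y.
Proof.
  destruct x, y; simpl; try tauto. rewrite Nat.min_glb_iff. tauto.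
Qed.
Theorem proposition4p5
  (V : Type) (E : V -> V -> Prop) (r0 : V)
  (M : Type) (mul : M -> M -> M) (one : M)
  (alpha : ray V) (theta : M -> V -> V)
  (HM : is_monoid mul one)
  (Hchi : elliptic_M_tree E r0 mul one alpha theta) :
  (* (i) *)
  length_function mul (D_chi alpha theta) /\
  (* (ii) *)
  (forall l : nat, tree_depth_eq E r0 l ->
     forall m m' : M,
       D_chi alpha theta m m' <> Omega /\
       d_of l (D_chi alpha theta) m m'
         = dist E (theta m (rf alpha l)) (theta m' (rf alpha l))) /\
  (* (iii) *)
  (forall l : nat, tree_depth_eq E r0 l ->
     strongly_faithful alpha theta ->
     ultrametric (d_of l (D_chi alpha theta))).
Proof.
  destruct Hchi as [[Esym [Eirr [Econn Hacyc]]] [Hunif [Hmax [[Hell [Hone Hmul]] Htrans]]]].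
  assert (Hr0 : forall m, theta m r0 = r0).
  { intros m. apply (dep_0 Econn). destruct (Hell m) as [Hd _]. rewrite Hd.
    apply (dep_r0 Econn). }
  assert (alpha0 : rf alpha 0 = r0) by (apply Hmax).
  set (D := D_chi alpha theta).
  assert (Hspec : forall m m' i, nb_le (Fin i) (D m m') <->
             agree (ray_act alpha (theta m)) (ray_act alpha (theta m')) i).
  { intros m m'. apply meet_spec. repeat split.
    - simpl. destruct (rlen alpha); simpl; auto; lia.
    - simpl. destruct (rlen alpha); simpl; auto; lia.
    - intros j Hj. assert (j = 0) by lia. subst j. simpl. rewrite alpha0, !Hr0. reflexivity. }
  assert (L1 : forall m m', D m m' = D m' m).
  { intros m m'. apply nb_le_antisym; apply nb_le_via; intros i Hi;
    apply Hspec; apply Hspec in Hi; destruct Hi as [A1 [A2 A3]];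
    repeat split; auto; intros j Hj; symmetry; auto. }
  assert (L4 : forall m m' m'', nb_le (nb_min (D m m') (D m' m'')) (D m m'')).
  { intros m m' m''. apply nb_le_via. intros i Hi. apply nb_min_Fin in Hi as [Hi1 Hi2].
    apply Hspec in Hi1, Hi2. apply Hspec.
    destruct Hi1 as [A1 [A2 A3]], Hi2 as [B1 [B2 B3]].
    repeat split; auto. intros j Hj. rewrite A3 by auto. auto. }
  assert (Hlen : forall l, tree_depth_eq E r0 l -> rlen alpha = Fin l).
  { intros l [Hall [v Hv]].
    destruct (chain_exists Esym Econn r0 v) as [c [Cc Hcv]]. rewrite Hv in Cc, Hcv.
    assert (Hmb : maximal_ray E r0 (Ray (Fin l) c)).
    { split.
      - split; simpl.
        + apply (dep_0 Econn). apply Cc. lia.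
        + split. apply Cc.
          rewrite Hcv. replace (c 0) with r0. rewrite (dist_sym Esym Econn). exact Hv.
          symmetry. apply (dep_0 Econn). apply Cc. lia.
      - intros b' [Hb0 Hb'] [Hle Hagr]. simpl in Hle, Hagr.
        destruct (rlen b') as [k|] eqn:Hr.
        + destruct Hb' as [_ Hdk]. simpl in Hle.
          assert (Hk : dep E r0 (rf b' k) = k).
          { unfold dep. rewrite (dist_sym Esym Econn). rewrite Hb0 in Hdk. exact Hdk. }
          pose proof (Hall (rf b' k)). split.
          * rewrite Hr. simpl. lia.
          * intros i Hi. rewrite Hr in Hi. simpl in Hi. symmetry. apply Hagr. lia.
        + destruct Hb' as [_ Hdk]. pose proof (Hall (rf b' (S l))). rewrite Hdk in H. lia. }
    rewrite (Hunif alpha (Ray (Fin l) c) Hmax Hmb). reflexivity. }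
  assert (HD : forall l, rlen alpha = Fin l -> forall m m', exists k, D m m' = Fin k /\ k <= l /\
            (forall i, i <= k <-> agree (ray_act alpha (theta m)) (ray_act alpha (theta m')) i)).
  { intros l Hl m m'. destruct (D m m') as [k|] eqn:HDm.
    - exists k. split; auto. split.
      + assert (Ak : agree (ray_act alpha (theta m)) (ray_act alpha (theta m')) k).
        { apply Hspec. rewrite HDm. simpl. lia. }
        destruct Ak as [A1 _]. simpl in A1. rewrite Hl in A1. exact A1.
      + intros i. rewrite <- Hspec. rewrite HDm. simpl. tauto.
    - exfalso. assert (Ak : agree (ray_act alpha (theta m)) (ray_act alpha (theta m')) (S l)).
      { apply Hspec. rewrite HDm. simpl. auto. }
      destruct Ak as [A1 _]. simpl in A1. rewrite Hl in A1. simpl in A1. lia. }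
  assert (Calpha : forall l, rlen alpha = Fin l -> chain E r0 (rf alpha) l).
  { intros l Hl. destruct (proj1 Hmax) as [_ Hr]. rewrite Hl in Hr. destruct Hr as [Ea Da].
    split; auto. intros i Hi. apply Nat.le_antisymm.
    - unfold dep. rewrite (dist_sym Esym Econn). rewrite <- alpha0.
      pose proof (dist_le Econn (chain_walk E (rf alpha) Ea (le_0_n i) Hi)). lia.
    - pose proof (dist_le Econn (chain_walk E (rf alpha) Ea Hi (le_n l))).
      pose proof (dist_tri Econn (rf alpha l) (rf alpha i) (rf alpha 0)).
      unfold dep. rewrite (dist_sym Esym Econn). rewrite <- alpha0. lia. }
  assert (Cact : forall m c l, chain E r0 c l -> chain E r0 (fun i => theta m (c i)) l).
  { intros m c l [Dc Ec]. destruct (Hell m) as [Hd Hdist]. split.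
    - intros i Hi. rewrite Hd. auto.
    - intros i Hi. pose proof (Hdist (c (S i)) (c i)).
      pose proof (dist_edge Econn _ _ (Ec i Hi)).
      assert (Hne : dist E (theta m (c (S i))) (theta m (c i)) <> 0).
      { intros Hz. apply (dist0 Econn _ _) in Hz. apply (f_equal (dep E r0)) in Hz.
        rewrite !Hd, !Dc in Hz; lia. }
      apply (walk1_inv (E:=E)).
      replace 1 with (dist E (theta m (c (S i))) (theta m (c i))) by lia.
      apply (dist_walk Econn). }
  split; [|split].
  -
    split; [exact L1|split; [|split]].
    + intros m m' m''. apply nb_le_via. intros i Hi. apply Hspec. apply Hspec in Hi.
      destruct Hi as [A1 [A2 A3]]. repeat split; auto.
    + intros m m' m''. apply nb_le_via. intros i Hi. apply Hspec. apply Hspec in Hi.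
      destruct Hi as [A1 [A2 A3]]. repeat split; auto. intros j Hj. simpl.
      rewrite !Hmul. simpl in A3. rewrite A3 by auto. reflexivity.
    + exact L4.
  - intros l Hl m m'. pose proof (Hlen l Hl) as Hl'.
    destruct (HD l Hl' m m') as [k [Hk [Hkl Hag]]].
    unfold d_of. rewrite Hk. split; [discriminate|].
    assert (Ak : agree (ray_act alpha (theta m)) (ray_act alpha (theta m')) k) by (apply Hag; lia).
    pose proof (@chain_dist V E Esym Econn r0 Eirr Hacyc
                  (fun i => theta m (rf alpha i)) (fun i => theta m' (rf alpha i)) l k
                  (Cact m _ l (Calpha l Hl')) (Cact m' _ l (Calpha l Hl')) Hkl) as R.
    cbv beta in R. rewrite R. reflexivity.
    + intros i Hi. apply Ak. exact Hi.
    + intros Hkl' Heq. assert (S k <= k); [|lia]. apply Hag.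
      destruct Ak as [A1 [A2 A3]]. repeat split; simpl; try (rewrite Hl'; simpl; lia).
      intros j Hj. destruct (Nat.eq_dec j (S k)). subst j; exact Heq. apply A3. lia.
  - intros l Hl Hsf. pose proof (Hlen l Hl) as Hl'. split; [|split].
    + intros m m'. destruct (HD l Hl' m m') as [k [Hk [Hkl Hag]]]. unfold d_of. rewrite Hk.
      split.
      * intros H0. assert (k = l) by lia. subst k.
        assert (Ak : agree (ray_act alpha (theta m)) (ray_act alpha (theta m')) l) by (apply Hag; lia).
        destruct Ak as [A1 [A2 A3]]. apply Hsf. split; split; simpl; try apply nb_le_refl;
        intros i Hi; rewrite Hl' in Hi; simpl in Hi; [|symmetry]; apply A3; auto.
      * intros <-. assert (l <= k); [|lia]. apply Hag. repeat split; simpl;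
        try (rewrite Hl'; simpl; lia).
    + intros m m'. unfold d_of. rewrite L1. reflexivity.
    + intros m m' m''. destruct (HD l Hl' m m') as [k1 [Hk1 _]].
      destruct (HD l Hl' m' m'') as [k2 [Hk2 _]]. destruct (HD l Hl' m m'') as [k3 [Hk3 _]].
      pose proof (L4 m m' m'') as H4. rewrite Hk1, Hk2, Hk3 in H4. simpl in H4.
      unfold d_of. rewrite Hk1, Hk2, Hk3. lia.
Qed.
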